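(* Let $\mathcal L$ be a finite atomic lattice with atoms $A_1,\dots,A_n$ and $\mathcal G$ a building set in $\mathcal L$. The toric variety $X_{\Sigma(\mathcal L,\mathcal G)}$ associated with the fan $\Sigma(\mathcal L,\mathcal G)=\{V(\mathcal S):\mathcal S\text{ nested in }\mathcal G\}$ can be constructed as follows: start from $\mathbb C^n$, the toric variety of the cone spanned by the standard basis of $\mathbb Z^n$, stratified by torus orbits; perform successively the blowups along the torus orbit closures associated with the faces $V(\lfloor G\rfloor)$ of the standard cone, for $G\in\mathcal G$ taken in a linear order $\succ$ such that $G\le G'$ in $\mathcal L$ implies $G'\succeq G$ (i.e. larger elements first); finally remove from the resulting variety all open torus orbits corresponding to cones $V(\mathcal T)$ of the resulting fan whose index set $\mathcal T\subseteq\mathcal G$ is not nested.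
   Context: A lattice is a finite poset in which every subset has a join $\vee$ and a meet; $\hat0$ is its least element; atomic means every element is a join of atoms. For $X\le Y$ write $[X,Y]=\{Z:X\le Z\le Y\}$ and $\mathcal G_{\le X}=\{G\in\mathcal G:G\le X\}$. A subset $\mathcal G\subseteq\mathcal L\setminus\{\hat0\}$ is a building set if for every $X\ne\hat0$, with $\{G_1,\dots,G_k\}$ the maximal elements of $\mathcal G_{\le X}$, there is a poset isomorphism $\prod_{i=1}^k[\hat0,G_i]\to[\hat0,X]$ sending $(\hat0,\dots,G_i,\dots,\hat0)$ to $G_i$. A subset $\mathcal S\subseteq\mathcal G$ is nested if for every set of pairwise incomparable $G_1,\dots,G_t\in\mathcal S$, $t\ge2$, $G_1\vee\dots\vee G_t\notin\mathcal G$. For $X\in\mathcal L$, $\lfloor X\rfloor$ is the set of atoms below $X$, $v_X\in\mathbb R^n$ has $i$-th coordinate $1$ if $A_i\le X$ and $0$ otherwise, and $V(\mathcal S)$ is the cone spanned by $\{v_X:X\in\mathcal S\}$. The blowup along the orbit closure of $V(\lfloor G\rfloor)$ is the toric blowup corresponding to the barycentric stellar subdivision of the fan at that cone, introducing the ray spanned by $v_G$. *)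

(* Defs.v *)
From HB Require Import structures.
From mathcomp Require Import all_boot all_order all_algebra.
From mathcomp Require Import finmap.
Set Implicit Arguments. Unset Strict Implicit. Unset Printing Implicit Defensive.
Import Order.TTheory.
Local Open Scope order_scope.
Local Open Scope fset_scope.

(* Lattice-theoretic notions.  A finite lattice is a finTBLatticeType  *)
(* (finite, with \bot = \hat0 and \top).                               *)
Section LatticeDefs.
Context {disp : Order.disp_t} {L : finTBLatticeType disp}.

Definition is_atom (A : L) : bool :=
  (\bot < A) && [forall Y : L, ~~ ((\bot < Y) && (Y < A))].

Definition atoms : {set L} := [set A : L | is_atom A].

Definition floor (X : L) : {set L} := [set A in atoms | A <= X].

Definition atomic : Prop :=
  forall X : L, X = \join_(A in floor X) A.

Definition maxbelow (G : {set L}) (X : L) : {set L} :=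
  [set H in G | (H <= X) && [forall H' in G, ~~ ((H < H') && (H' <= X))]].

(* Product of the intervals [\hat0, G_i], G_i in M, encoded as finite
   functions f with f G_i \in [\hat0, G_i] and f Y = \hat0 for Y \notin M;
   ordered componentwise. *)
Definition prod_elt (M : {set L}) (f : {ffun L -> L}) : bool :=
  [forall Y : L, if Y \in M then f Y <= Y else f Y == \bot].

Definition prod_le (M : {set L}) (f g : {ffun L -> L}) : bool :=
  [forall Y in M, f Y <= g Y].

Definition prod_unit (Gi : L) : {ffun L -> L} :=
  [ffun Y => if Y == Gi then Gi else \bot].

(* poset isomorphism prod_{G_i in M} [\hat0, G_i] -> [\hat0, X] sending
   (\hat0, .., G_i, .., \hat0) to G_i *)
Definition prod_iso (M : {set L}) (X : L) (phi : {ffun L -> L} -> L) : Prop :=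
  [/\ (forall f, prod_elt M f -> phi f <= X),
      (forall f g, prod_elt M f -> prod_elt M g -> phi f = phi g -> f = g),
      (forall Y, Y <= X -> exists2 f, prod_elt M f & phi f = Y),
      (forall f g, prod_elt M f -> prod_elt M g ->
                   prod_le M f g = (phi f <= phi g)) &
      (forall Gi, Gi \in M -> phi (prod_unit Gi) = Gi)].

Definition building_set (G : {set L}) : Prop :=
  \bot \notin G /\
  forall X : L, X != \bot -> exists phi, prod_iso (maxbelow G X) X phi.

Definition nested (G S : {set L}) : bool :=
  (S \subset G) &&
  [forall H : {set L},
     ((H \subset S) && (1 < #|H|)%N &&
      [forall x in H, forall y in H, (x != y) ==> ~~ ((x <= y) || (y <= x))])
     ==> ((\join_(x in H) x) \notin G)].

End LatticeDefs.

(* Simplicial fans in Z^n, each cone recorded by its (finite) set of    *)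
(* generating ray vectors in Z^n.                                       *)
Definition vect (n : nat) := {ffun 'I_n -> int}.
Definition cone (n : nat) := {fset vect n}.
Definition fan (n : nat) := {fset cone n}.

Definition std_basis (n : nat) (i : 'I_n) : vect n :=
  [ffun j => Posz (i == j)].

(* the fan of the standard cone (all its faces): toric variety C^n *)
Definition standard_fan (n : nat) : fan n :=
  fpowerset [fset std_basis i | i in 'I_n].

Definition barycenter (n : nat) (tau : cone n) : vect n :=
  [ffun j => (\sum_(u <- tau) u j)%R].

(* Barycentric stellar subdivision of a simplicial fan F at the cone tau
   (toric blowup along the orbit closure of tau): cones not containing tau
   are kept; every cone sigma containing tau is replaced by the cones
   cone(u_tau, sigma') for the faces sigma' of sigma not containing tau. *)
Definition stellar (n : nat) (F : fan n) (tau : cone n) : fan n :=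
  [fset sigma in F | ~~ (tau `<=` sigma)] `|`
  [fset barycenter tau |` sigma'
     | sigma in [fset s in F | tau `<=` s],
       sigma' in [fset s' in fpowerset sigma | ~~ (tau `<=` s')]].

Section FanOfLattice.
Context {disp : Order.disp_t} {L : finTBLatticeType disp}.

Definition vX (n : nat) (A : 'I_n -> L) (X : L) : vect n :=
  [ffun i => Posz (A i <= X)%O].

Definition Vcone (n : nat) (A : 'I_n -> L) (S : {set L}) : cone n :=
  [fset vX A X | X in S].

Definition nested_fan (n : nat) (A : 'I_n -> L) (G : {set L}) : fan n :=
  [fset Vcone A S | S in [set S : {set L} | nested G S]].

Definition blowup_fan (n : nat) (A : 'I_n -> L) (s : seq L) : fan n :=
  foldl (fun F G => stellar F (Vcone A (floor G))) (standard_fan n) s.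

Definition remove_non_nested (n : nat) (A : 'I_n -> L) (G : {set L})
    (F : fan n) : fan n :=
  [fset sigma in F |
     ~~ [exists T : {set L}, [&& T \subset G, sigma == Vcone A T & ~~ nested G T]]].

End FanOfLattice.

(* Main.v *)
Require Import Defs.
From HB Require Import structures.
From mathcomp Require Import all_boot all_order all_algebra.
From mathcomp Require Import finmap.
Import Order.TTheory.
Local Open Scope order_scope.
Local Open Scope fset_scope.
Set Implicit Arguments. Unset Strict Implicit. Unset Printing Implicit Defensive.

Section S1.
Context {disp : Order.disp_t} {L : finTBLatticeType disp}.
Context (n : nat) (A : 'I_n -> L) (G : {set L}).
Hypothesis hatomic : atomic (L := L).
Hypothesis hAinj : injective A.
Hypothesis hatoms : forall X : L, is_atom X <-> exists i, X = A i.

Lemma atom_neq0 (a : L) : is_atom a -> a != \bot.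
Proof. by case/andP; rewrite lt0x. Qed.

Lemma atom_le (a Y : L) : is_atom a -> Y <= a -> Y = \bot \/ Y = a.
Proof.
case/andP=> _ /forallP /(_ Y) H Ya.
have [->|Y0] := eqVneq Y \bot; first by left.
have [->|Ya'] := eqVneq Y a; first by right.
by move: H; rewrite lt0x Y0 lt_neqAle Ya' Ya.
Qed.

Lemma atomA i : is_atom (A i).
Proof. by apply/hatoms; exists i. Qed.

Lemma vX_inj : injective (vX A).
Proof.
move=> X Y eXY.
have fl : floor X = floor Y.
  apply/setP => a; rewrite !inE.
  case ha: (is_atom a) => //=.
  have [i ->] := (proj1 (hatoms a)) ha.
  have := congr1 (fun f : vect n => f i) eXY; rewrite !ffunE.
  by case: (A i <= X); case: (A i <= Y).
by rewrite (hatomic X) (hatomic Y) fl.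
Qed.

Lemma std_basis_inj : injective (@std_basis n).
Proof.
move=> i j /(congr1 (fun f : vect n => f j)); rewrite !ffunE eqxx.
by case: eqP.
Qed.

Lemma vX_atom i : vX A (A i) = std_basis i.
Proof.
apply/ffunP => j; rewrite !ffunE; congr (Posz (nat_of_bool _)).
have [->|ij] := eqVneq i j; first by rewrite lexx.
apply/negbTE/negP => /(atom_le (atomA i)) [/eqP|].
  by rewrite (negbTE (atom_neq0 (atomA j))).
by move/hAinj => ji; rewrite ji eqxx in ij.
Qed.


Lemma mem_Vcone X T : (vX A X \in Vcone A T) = (X \in T).
Proof. by rewrite /Vcone mem_imfset //; apply: vX_inj. Qed.

Lemma Vcone_sub T1 T2 : (Vcone A T1 `<=` Vcone A T2) = (T1 \subset T2).
Proof.
apply/fsubsetP/subsetP => H x.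
  by move=> xT1; rewrite -mem_Vcone; apply: H; rewrite mem_Vcone.
by case/imfsetP => y /= yT1 ->; rewrite mem_Vcone; apply: H.
Qed.

Lemma VconeU1 x T : Vcone A (x |: T) = vX A x |` Vcone A T.
Proof.
apply/fsetP => v; rewrite in_fset1U.
apply/imfsetP/idP => [[y /=]|].
  by rewrite in_setU1 => /orP [/eqP -> ->|yT ->]; rewrite ?eqxx // mem_Vcone yT orbT.
case/orP => [/eqP ->|/imfsetP [y /= yT ->]].
  by exists x => //; rewrite in_setU1 eqxx.
by exists y => //; rewrite in_setU1 yT orbT.
Qed.

Lemma Vcone_sub_inv (sigma : cone n) T :
  sigma `<=` Vcone A T -> sigma = Vcone A [set X in T | vX A X \in sigma].
Proof.
move/fsubsetP => H; apply/fsetP => v; apply/idP/imfsetP => [vs|[y /=]].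
  have /imfsetP [y /= yT ev] := H v vs.
  by exists y => //; rewrite inE yT -ev vs.
by rewrite inE => /andP [_ ?] ->.
Qed.

Lemma Vcone_atoms (T : {set L}) : (forall a, a \in T -> is_atom a) ->
  Vcone A T \in standard_fan n.
Proof.
move=> HT; rewrite /standard_fan fpowersetE; apply/fsubsetP => v.
case/imfsetP => a /= /HT /hatoms [i ->] ->.
by rewrite vX_atom; apply/imfsetP; exists i.
Qed.

Lemma std_in_floor j g : (std_basis j \in Vcone A (floor g)) = (A j <= g).
Proof.
rewrite -vX_atom mem_Vcone inE; apply/andP/idP => [[]//|->]; split=> //.
by rewrite inE; apply: atomA.
Qed.

Lemma bary_floor g : barycenter (Vcone A (floor g)) = vX A g.
Proof.
apply/ffunP => j; rewrite !ffunE.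
have Hu : forall u, u \in Vcone A (floor g) -> exists i, u = std_basis i.
  move=> u /imfsetP [a /=]; rewrite !inE => /andP [ha _] ->.
  by have [i ->] := proj1 (hatoms a) ha; exists i; rewrite vX_atom.
case: (boolP (A j <= g)) => hj.
  rewrite (big_fsetD1 (std_basis j)) /=; last by rewrite std_in_floor.
  rewrite big1_fset ?GRing.addr0 ?ffunE ?eqxx // => u.
  rewrite !inE => /andP [uj /Hu [i ei]] _; subst u.
  rewrite ffunE; case: eqP => // ij; subst i; by rewrite eqxx in uj.
rewrite big1_fset // => u /[dup] uin /Hu [i ei] _; subst u.
rewrite ffunE; case: eqP => // ij; subst i.
by rewrite std_in_floor (negbTE hj) in uin.
Qed.

Hypothesis hbuild : building_set G.

Definition antichain (T : {set L}) : bool :=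
  [forall x in T, forall y in T, (x != y) ==> ~~ ((x <= y) || (y <= x))].

Lemma exists_max (X Y : L) : Y \in G -> Y <= X ->
  exists2 M, M \in maxbelow G X & Y <= M.
Proof.
move=> YG YX.
pose P := fun M : L => [&& M \in G, Y <= M & M <= X].
have PY : P Y by rewrite /P YG lexx YX.
have [M /and3P [MG YM MX] maxM] := @arg_maxnP L Y P (fun M => #|[set Z : L | Z <= M]|) PY.
exists M => //; rewrite inE MG MX /=; apply/forall_inP => H' H'G.
apply/negP => /andP [MH' H'X].
have : P H' by rewrite /P H'G (le_trans YM (ltW MH')) H'X.
move/maxM; apply/negP; rewrite -ltnNge; apply: proper_card.
apply/properP; split.
  by apply/subsetP => Z; rewrite !inE => ZM; apply: le_trans ZM (ltW MH').
by exists H'; rewrite !inE ?lexx // (lt_geF MH').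
Qed.

Lemma prod_unit_elt (Ms : {set L}) Gi : Gi \in Ms -> prod_elt Ms (prod_unit Gi).
Proof.
move=> GiM; apply/forallP => Y; rewrite ffunE.
case: eqP => [->|_]; first by rewrite GiM lexx.
by case: ifP => _; rewrite ?le0x.
Qed.

Lemma nested_join_below (S T : {set L}) (Y : L) :
  nested G S -> T \subset S -> antichain T -> Y \in G ->
  Y <= \join_(t in T) t -> exists2 t, t \in T & Y <= t.
Proof.
case/andP => SG nS TS aT YG.
set X := \join_(t in T) t => YX.
have TG : T \subset G := subset_trans TS SG.
have G0 : \bot \notin G := hbuild.1.
have [X0|X0] := eqVneq X \bot.
  by move: YX; rewrite X0 lex0 => /eqP Y0; rewrite -Y0 YG in G0.
have [phi [Hle Hinj Hsurj Hord Hunit]] := hbuild.2 X X0.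
set Ms := maxbelow G X in Hle Hinj Hsurj Hord Hunit.
have [M MMs YM] := exists_max YG YX.
have MG : M \in G by move: MMs; rewrite inE => /andP [].
have MX : M <= X by move: MMs; rewrite inE => /and3P [].
suff MT : M \in T by exists M.
pose gM := [set t in T | t <= M].
have eqM : \join_(t in gM) t = M.
  set Z := \join_(t in gM) t.
  have ZM : Z <= M by apply/joinsP => t; rewrite inE => /andP [].
  have [z Pz ez] := Hsurj Z (le_trans ZM MX).
  pose w := [ffun Y => if Y == M then z Y else if Y \in Ms then Y else \bot].
  have Pw : prod_elt Ms w.
    apply/forallP => Y'; rewrite ffunE.
    case: (eqVneq Y' M) => [->|YM']; first by rewrite MMs; have := forallP Pz M; rewrite MMs.
    by case: ifP => h; rewrite h ?lexx.
  have Xw : X <= phi w.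
    apply/joinsP => t tT.
    have tX : t <= X by apply: joins_sup.
    have [f Pf ef] := Hsurj t tX.
    rewrite -ef -(Hord f w Pf Pw); apply/forall_inP => Y' Y'M; rewrite ffunE.
    case: eqP => [->|_]; last first.
      by rewrite Y'M; have := forallP Pf Y'; rewrite Y'M.
    case: (boolP (t <= M)) => tM.
      have : t <= Z by apply: joins_sup; rewrite inE tT tM.
      rewrite -ef -ez -(Hord f z Pf Pz) => /forall_inP; apply.
      exact: MMs.
    have tG : t \in G by apply: (subsetP TG).
    have [Mt MtMs tMt] := exists_max tG tX.
    have MtM : Mt != M by apply/eqP => eMt; rewrite -eMt tMt in tM.
    have : t <= Mt by [].
    rewrite -ef -{1}(Hunit Mt MtMs) -(Hord f _ Pf (prod_unit_elt MtMs)).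
    move=> /forall_inP /(_ M MMs); rewrite ffunE eq_sym (negbTE MtM) lex0.
    by move/eqP ->; rewrite le0x.
  have : M <= phi w by apply: le_trans MX Xw.
  rewrite -{1}(Hunit M MMs) -(Hord _ w (prod_unit_elt MMs) Pw).
  move=> /forall_inP /(_ M MMs); rewrite !ffunE eqxx => MzM.
  apply/le_anti; rewrite ZM /=.
  rewrite -{1}(Hunit M MMs) -ez -(Hord _ z (prod_unit_elt MMs) Pz).
  apply/forall_inP => Y' _; rewrite ffunE.
  by case: eqP => [->|_]; rewrite ?le0x.
have gMS : gM \subset S.
  by apply/subsetP => t; rewrite inE => /andP [tT _]; apply: (subsetP TS).
have agM : antichain gM.
  apply/forall_inP => x; rewrite inE => /andP [xT _].
  apply/forall_inP => y; rewrite inE => /andP [yT _].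
  by have := forall_inP aT x xT => /forall_inP /(_ y yT).
case: (ltnP 1 #|gM|) => cg.
  have := forallP nS gM; rewrite gMS cg; rewrite /antichain in agM; rewrite agM /= eqM MG; done.
move: cg; rewrite leq_eqVlt ltnS leqn0 => /orP [/cards1P [t et]|/eqP /cards0_eq e0].
  move: eqM; rewrite et big_set1 => <-.
  have : t \in gM by rewrite et set11.
  by rewrite inE => /andP [].
by move: eqM; rewrite e0 big_set0 => M0; rewrite -M0 in MG; rewrite MG in G0.
Qed.

Context (s : seq L).
Hypothesis huniq : uniq s.
Hypothesis hsG : forall X : L, (X \in s) = (X \in G).
Hypothesis hord : forall X Y : L, X \in G -> Y \in G -> X <= Y -> (index Y s <= index X s)%N.

Lemma stellarA (F : fan n) tau sigma :
  sigma \in F -> ~~ (tau `<=` sigma) -> sigma \in stellar F tau.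
Proof.
move=> sF nts; rewrite /stellar in_fsetU; apply/orP; left.
by apply/imfsetP; exists sigma => //=; rewrite inE sF nts.
Qed.

Lemma stellarB (F : fan n) tau sigma0 sigma' :
  sigma0 \in F -> tau `<=` sigma0 -> sigma' `<=` sigma0 -> ~~ (tau `<=` sigma') ->
  barycenter tau |` sigma' \in stellar F tau.
Proof.
move=> s0F ts0 s's0 nts'; rewrite /stellar in_fsetU; apply/orP; right.
apply/imfset2P; exists sigma0; first by rewrite !inE /= s0F ts0.
by exists sigma' => //=; rewrite !inE /= fpowersetE s's0 nts'.
Qed.

Lemma stellar_inv (F : fan n) tau sigma : sigma \in stellar F tau ->
  sigma \in F \/ exists2 sigma0, sigma0 \in F &
     exists2 sigma', sigma' `<=` sigma0 & sigma = barycenter tau |` sigma'.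
Proof.
rewrite /stellar in_fsetU => /orP [/imfsetP [x /=]|/imfset2P [x /=]].
  by rewrite inE => /andP [xF _] ->; left.
rewrite !inE => /andP [xF _] [y /=]; rewrite !inE /= => /andP [yx _] ->.
by right; exists x => //; exists y => //; rewrite -fpowersetE.
Qed.

Definition good (F : fan n) := forall sigma, sigma \in F ->
  exists2 T : {set L}, T \subset G & sigma = Vcone A T.

Lemma atoms_in_G a : is_atom a -> a \in G.
Proof.
move=> ha.
have [phi [Hle Hinj Hsurj Hord Hunit]] := hbuild.2 a (atom_neq0 ha).
set Ms := maxbelow G a in Hle Hinj Hsurj Hord Hunit.
case: (set_0Vmem Ms) => [Ms0|[x xMs]].
  have [f Pf ef] := Hsurj \bot (le0x _).
  have [f' Pf' ef'] := Hsurj a (lexx _).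
  have ff' : f = f'.
    apply/ffunP => Y; have := forallP Pf Y; have := forallP Pf' Y.
    by rewrite Ms0 in_set0 => /eqP -> /eqP ->.
  by move: (atom_neq0 ha); rewrite -ef' -ff' ef eqxx.
move: xMs; rewrite inE => /andP [xG /andP [Ha _]].
have [x0|<-//] := atom_le ha Ha.
by move: hbuild.1; rewrite -x0 xG.
Qed.

Lemma good_std : good (standard_fan n).
Proof.
move=> sigma; rewrite /standard_fan fpowersetE => H.
have H' : sigma `<=` Vcone A atoms.
  apply/fsubsetP => v /(fsubsetP H) /imfsetP [i _ ->].
  by rewrite -vX_atom // mem_Vcone // inE; apply: atomA.
exists [set X in atoms | vX A X \in sigma]; last exact: Vcone_sub_inv.
by apply/subsetP => X; rewrite !inE => /andP [hX _]; apply: atoms_in_G.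
Qed.

Lemma good_stellar (F : fan n) g : g \in G -> good F ->
  good (stellar F (Vcone A (floor g))).
Proof.
move=> gG gF sigma /stellar_inv [/gF //|[s0 /gF [T0 T0G ->] [s' s's0 ->]]].
rewrite (Vcone_sub_inv s's0) bary_floor // -VconeU1.
exists (g |: [set X in T0 | vX A X \in s']) => //.
apply/subsetP => X; rewrite !inE => /orP [/eqP -> //|/andP [XT0 _]].
exact: (subsetP T0G).
Qed.

Lemma good_blowup : good (blowup_fan A s).
Proof.
rewrite /blowup_fan.
have : all (mem G) s by apply/allP => X; rewrite /= -hsG.
elim: s (standard_fan n) good_std => [|g p IH] F gF //= /andP [gG pG].
by apply: IH => //; apply: good_stellar.
Qed.


Section Inner.
Context (S : {set L}).
Hypothesis hS : nested G S.

Definition R (q : seq L) : {set L} :=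
  [set X | ((X \in S) && (X \notin q)) ||
           (is_atom X && [exists H in S, (H \in q) && (X <= H)])].

Lemma SG : S \subset G.
Proof. by case/andP: hS. Qed.

Lemma G0 : \bot \notin G.
Proof. by case: hbuild. Qed.

Lemma uniq_split p g q : s = p ++ g :: q ->
  [/\ g \notin p, g \notin q & forall H, H \in q -> H \notin p].
Proof.
move=> es; move: huniq; rewrite es cat_uniq => /and3P [_ hp /andP [gq _]].
split=> //.
  by apply/negP => gp; move: hp; apply/negP; rewrite negbK; apply/hasP; exists g; rewrite ?inE ?eqxx.
move=> H Hq; apply/negP => Hp; move: hp; apply/negP; rewrite negbK.
by apply/hasP; exists H => //; rewrite inE Hq orbT.
Qed.

Lemma later_not_ge p g q H : s = p ++ g :: q -> H \in q -> H \in G ->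
  g \in G -> ~~ (g <= H).
Proof.
move=> es Hq HG gG; apply/negP => gH.
have [gp gq Hp] := uniq_split es.
have := hord gG HG gH; rewrite es !index_cat (negbTE gp) (negbTE (Hp H Hq)) /=.
rewrite eqxx; case: eqP => [eH|_]; first by rewrite eH Hq in gq.
by rewrite addn0 -{2}[size p]addn0 leq_add2l.
Qed.

Lemma key p g q : s = p ++ g :: q -> ~~ (floor g \subset R q :\ g).
Proof.
move=> es; apply/negP => Hsub.
have gG : g \in G by rewrite -hsG es mem_cat inE eqxx orbT.
have g0 : g != \bot by apply/negP => /eqP g0; move: G0; rewrite -g0 gG.
case: (boolP (is_atom g)) => ga.
  have : g \in floor g by rewrite !inE ga lexx.
  by move/(subsetP Hsub); rewrite !inE eqxx.
pose C := [set c in S | ~~ (g <= c)].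
have gC : g <= \join_(c in C) c.
  rewrite {1}(hatomic g); apply/joinsP => a; rewrite !inE => /andP [aa ag].
  have := subsetP Hsub a; rewrite !inE aa ag /= => /(_ isT) /andP [ag' /orP [/andP [aS _]|]].
    apply: joins_sup; rewrite inE aS /=; apply/negP => ga'.
    have [a0|ea] := atom_le aa ga'; first by rewrite a0 eqxx in g0.
    by rewrite ea eqxx in ag'.
  case/exists_inP => H HS /andP [Hq aH].
  apply: (joins_min (j := H)) => //; rewrite inE HS /=.
  by apply: (later_not_ge es) => //; apply: (subsetP SG).
suff : forall k (T : {set L}), (#|T| <= k)%N -> T \subset C ->
    g <= \join_(t in T) t -> False.
  by move/(_ #|C| C (leqnn _) (subxx _) gC).
have CS : C \subset S by apply/subsetP => c; rewrite inE => /andP [].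
elim=> [|k IH] T cT TC gT.
  move: cT; rewrite leqn0 => /eqP /cards0_eq T0.
  by move: gT; rewrite T0 big_set0 lex0 (negbTE g0).
case: (boolP (antichain T)) => aT.
  have [t tT gt] := nested_join_below hS (subset_trans TC CS) aT gG gT.
  have := subsetP TC t tT; rewrite !inE gt andbF //.
move/forall_inPn: aT => [x xT /forall_inPn [y yT]].
rewrite negb_imply negbK => /andP [xy cmp].
wlog xley : x y xT yT xy cmp / x <= y.
  move=> Hw; case/orP: (cmp) => c; first exact: (Hw x y).
  by apply: (Hw y x) => //; rewrite 1?eq_sym // orbC.
apply: (IH (T :\ x)).
- by rewrite -ltnS; apply: leq_trans cT; apply: (proper_card (properD1 xT)).
- by apply: subset_trans TC; apply: subsetDl.
apply: le_trans gT _; apply/joinsP => t tT.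
have [-> |tx] := eqVneq t x.
  by apply: joins_min xley; rewrite !inE eq_sym xy yT.
by apply: joins_sup; rewrite !inE tx tT.
Qed.

Lemma R_step_S p g q : s = p ++ g :: q -> g \in R q -> g \in S.
Proof.
move=> es; rewrite inE => /orP [/andP [] //|/andP [_ /exists_inP [H HS /andP [Hq gH]]]].
have gG : g \in G by rewrite -hsG es mem_cat inE eqxx orbT.
by have := later_not_ge es Hq (subsetP SG H HS) gG; rewrite gH.
Qed.

Lemma g_in_R p g q : s = p ++ g :: q -> g \in S -> g \in R q.
Proof.
move=> es gS; have [_ gq _] := uniq_split es.
by rewrite inE gS gq.
Qed.

Lemma R_eq p g q : s = p ++ g :: q -> g \notin S -> R q = R (g :: q).
Proof.
move=> es gS; apply/setP => X; rewrite !inE.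
have -> : (X \in S) && (X \notin q) = (X \in S) && ~~ ((X == g) || (X \in q)).
  case: (boolP (X \in S)) => //= XS.
  case: (eqVneq X g) => [eX|//]; subst X; by rewrite XS in gS.
congr (_ || (_ && _)); apply/exists_inP/exists_inP => [[H HS /andP [Hq XH]]|[H HS]].
  by exists H => //; rewrite inE Hq orbT XH.
rewrite inE => /andP [/orP [/eqP eH|Hq] XH]; first by rewrite -eH HS in gS.
by exists H => //; rewrite Hq XH.
Qed.

Lemma floor_R g q : g \in S -> floor g \subset R (g :: q).
Proof.
move=> gS; apply/subsetP => a; rewrite !inE => /andP [aa ag].
by rewrite aa; apply/orP; right; apply/exists_inP; exists g; rewrite ?inE ?eqxx.
Qed.

Lemma RD1_sub g q : R q :\ g \subset R (g :: q).
Proof.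
apply/subsetP => X; rewrite !inE => /andP [Xg /orP [/andP [XS Xq]|/andP [Xa /exists_inP [H HS /andP [Hq XH]]]]].
  by rewrite XS /= negb_or Xg Xq.
by rewrite Xa; apply/orP; right; apply/exists_inP; exists H => //; rewrite inE Hq orbT XH.
Qed.

Lemma main_inv p : forall q, s = p ++ q -> Vcone A (R q) \in blowup_fan A p.
Proof.
elim/last_ind: p => [|p g IH] q es.
  rewrite /blowup_fan /=; apply: Vcone_atoms => a; rewrite inE.
  case/orP => [/andP [aS aq]|/andP [] //].
  by move: aq; rewrite /= in es; rewrite -es hsG (subsetP SG a aS).
rewrite cat_rcons in es.
have IH' := IH (g :: q) es.
rewrite /blowup_fan foldl_rcons -/(blowup_fan A p).
case: (boolP (g \in R q)) => gR.
  have gS := R_step_S es gR.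
  rewrite -(setD1K gR) VconeU1 -(bary_floor g).
  apply: stellarB IH' _ _ _.
  - by rewrite Vcone_sub; apply: floor_R.
  - by rewrite Vcone_sub; apply: RD1_sub.
  - by rewrite Vcone_sub; apply: (key es).
have gS : g \notin S by apply/negP => gS; rewrite (g_in_R es gS) in gR.
apply: stellarA; first by rewrite (R_eq es gS).
rewrite Vcone_sub; apply/negP => sub; apply: (negP (key es)).
apply/subsetP => a af; rewrite in_setD1 (subsetP sub a af) andbT.
by apply/eqP => ag; rewrite ag in af; rewrite (subsetP sub _ af) in gR.
Qed.

Lemma R_nil : R [::] = S.
Proof. by apply/setP => X; rewrite !inE andbT; case: (X \in S) => //=; apply/negbTE; rewrite negb_and; apply/orP; right; apply/exists_inP => -[]. Qed.

End Inner.

Lemma final_sec : remove_non_nested A G (blowup_fan A s) = nested_fan A G.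
Proof.
apply/fsetP => sigma; apply/idP/idP.
  case/imfsetP => x /=; rewrite inE => /andP [xF nex] ->.
  have [T TG ex] := good_blowup xF.
  apply/imfsetP; exists T => //; rewrite inE.
  apply/negPn/negP => nT; move/negP: nex; apply; apply/existsP; exists T.
  by rewrite TG ex eqxx nT.
case/imfsetP => S /=; rewrite inE => hS ->.
apply/imfsetP; exists (Vcone A S) => //=; rewrite inE.
have := main_inv hS (esym (cats0 s)); rewrite R_nil => ->; rewrite /=.
apply/negP => /existsP [T /and3P [TG /eqP e nT]].
have eST : S = T by apply/eqP; rewrite eqEsubset -!Vcone_sub e !fsubset_refl.
by rewrite -eST hS in nT.
Qed.

End S1.

Unset Implicit Arguments.
Set Strict Implicit.

Theorem corollary6p2 (disp : Order.disp_t) (L : finTBLatticeType disp)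
    (n : nat) (A : 'I_n -> L) (G : {set L}) (s : seq L) :
  atomic (L := L) ->
  injective A ->
  (forall X : L, is_atom X <-> exists i, X = A i) ->
  building_set G ->
  uniq s ->
  (forall X : L, (X \in s) = (X \in G)) ->
  (forall X Y : L, X \in G -> Y \in G -> X <= Y -> (index Y s <= index X s)%N) ->
  remove_non_nested A G (blowup_fan A s) = nested_fan A G.
Proof.
move=> h1 h2 h3 h4 h5 h6 h7.
exact: (final_sec h1 h2 h3 h4 h5 h6 h7).
Qed.
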